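(* Let $r\colon\mathcal M_3\to\mathcal M_3$ be the reflection functor interchanging the roles of $\mathcal B^1$ and $\mathcal B^2$. For a diad $D^\bullet$ as below, $T^{-1}rT(D^\bullet)$ is isomorphic to the diad $$\ker(a_R)\xrightarrow{(a_L',b_L')}\mathcal A\oplus H(D^\bullet)\xrightarrow{(a_R',b_R')}\operatorname{coker}(a_L),$$ where $a_L'\colon\ker(a_R)\to\mathcal A$ is the natural inclusion, $a_R'\colon\mathcal A\to\operatorname{coker}(a_L)$ is the natural projection, $b_L'=h\circ(a_L',0)$ (viewing $(a_L',0)\colon\ker(a_R)\to\ker R\subset\mathcal A\oplus\mathcal B$), and $b_R'$ is the factorization of $-k$ through $\operatorname{coker}(a_L)\subset\operatorname{coker}(L)$.
   Context: Let $\mathcal A$ be an abelian category. A diad is a complex $D^\bullet=(\mathcal F_L\xrightarrow{L=(a_L,b_L)}\mathcal A\oplus\mathcal B\xrightarrow{R=(a_R,b_R)}\mathcal F_R)$ in $\mathcal A$ with $a_L$ injective and $a_R$ surjective; $H(D^\bullet)=\ker R/\operatorname{im}L$, $h\colon\ker R\to H(D^\bullet)$ the projection and $k\colon H(D^\bullet)\to\operatorname{coker}L$ the inclusion. A triad is a short exact sequence $0\to\mathcal F_-\xrightarrow{(c_-,d^1_-,d^2_-)}\mathcal A\oplus\mathcal B^1\oplus\mathcal B^2\xrightarrow{(c_+,d^1_+,d^2_+)}\mathcal F_+\to0$ such that for $i=1,2$, $(c_-,d^i_-)$ is injective and $(c_+,d^i_+)$ surjective. $T$ sends a diad to the triad $0\to\ker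 R\xrightarrow{(\iota_A,\iota_B,h)}\mathcal A\oplus\mathcal B\oplus H(D^\bullet)\xrightarrow{(\pi_A,\pi_B,-k)}\operatorname{coker}L\to0$, where $(\iota_A,\iota_B)$ is the inclusion of $\ker R$ and $(\pi_A,\pi_B)$ the projection to $\operatorname{coker}L$; $T^{-1}$ sends a triad to the diad $\ker(d^2_-)\xrightarrow{(c_-,d^1_-)}\mathcal A\oplus\mathcal B^1\to\operatorname{coker}(c_-,d^1_-)$. $T$ and $T^{-1}$ are mutually inverse equivalences between diads and triads. *)

(* Defs.v *)
From HB Require Import structures.
From mathcomp Require Import all_boot all_algebra.
Set Implicit Arguments. Unset Strict Implicit. Unset Printing Implicit Defensive.
Import GRing.Theory.
Local Open Scope ring_scope.

Record abcat := AbCat {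
  ob :> Type;
  hom : ob -> ob -> zmodType;
  comp : forall X Y Z : ob, hom Y Z -> hom X Y -> hom X Z;
  idm : forall X : ob, hom X X;
  compA : forall X Y Z W (f : hom Z W) (g : hom Y Z) (h : hom X Y),
      comp f (comp g h) = comp (comp f g) h;
  comp1m : forall X Y (f : hom X Y), comp (idm Y) f = f;
  compm1 : forall X Y (f : hom X Y), comp f (idm X) = f;
  compDl : forall X Y Z (f g : hom Y Z) (h : hom X Y),
      comp (f + g) h = comp f h + comp g h;
  compDr : forall X Y Z (f : hom Y Z) (g h : hom X Y),
      comp f (g + h) = comp f g + comp f h;
  zobj : ob;
  zobj_init : forall X (f : hom zobj X), f = 0;
  zobj_term : forall X (f : hom X zobj), f = 0;
  bip : ob -> ob -> ob;
  bi1 : forall X Y, hom X (bip X Y);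
  bi2 : forall X Y, hom Y (bip X Y);
  bp1 : forall X Y, hom (bip X Y) X;
  bp2 : forall X Y, hom (bip X Y) Y;
  bp1i1 : forall X Y, comp (bp1 X Y) (bi1 X Y) = idm X;
  bp2i2 : forall X Y, comp (bp2 X Y) (bi2 X Y) = idm Y;
  bp1i2 : forall X Y, comp (bp1 X Y) (bi2 X Y) = 0;
  bp2i1 : forall X Y, comp (bp2 X Y) (bi1 X Y) = 0;
  bsum : forall X Y, comp (bi1 X Y) (bp1 X Y) + comp (bi2 X Y) (bp2 X Y)
                     = idm (bip X Y);
  kerO : forall X Y, hom X Y -> ob;
  kerI : forall X Y (f : hom X Y), hom (kerO f) X;
  kerI0 : forall X Y (f : hom X Y), comp f (kerI f) = 0;
  kerLift : forall X Y (f : hom X Y) W, hom W X -> hom W (kerO f);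
  kerLiftK : forall X Y (f : hom X Y) W (g : hom W X),
      comp f g = 0 -> comp (kerI f) (kerLift f g) = g;
  kerI_mono : forall X Y (f : hom X Y) W (u v : hom W (kerO f)),
      comp (kerI f) u = comp (kerI f) v -> u = v;
  cokO : forall X Y, hom X Y -> ob;
  cokP : forall X Y (f : hom X Y), hom Y (cokO f);
  cokP0 : forall X Y (f : hom X Y), comp (cokP f) f = 0;
  cokDesc : forall X Y (f : hom X Y) W, hom Y W -> hom (cokO f) W;
  cokDescK : forall X Y (f : hom X Y) W (g : hom Y W),
      comp g f = 0 -> comp (cokDesc f g) (cokP f) = g;
  cokP_epi : forall X Y (f : hom X Y) W (u v : hom (cokO f) W),
      comp u (cokP f) = comp v (cokP f) -> u = v;
  (* every mono is the kernel of its cokernel *)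
  mono_normal : forall X Y (m : hom X Y),
      (forall W (g : hom W X), comp m g = 0 -> g = 0) ->
      forall W (g : hom W Y), comp (cokP m) g = 0 -> exists u, comp m u = g;
  (* every epi is the cokernel of its kernel *)
  epi_normal : forall X Y (e : hom X Y),
      (forall W (g : hom Y W), comp g e = 0 -> g = 0) ->
      forall W (g : hom X W), comp g (kerI e) = 0 -> exists u, comp u e = g
}.

Arguments hom {C} X Y : rename.
Arguments comp {C X Y Z} f g : rename.
Arguments idm {C} X : rename.
Arguments bip {C} X Y : rename.
Arguments bi1 {C X Y} : rename.
Arguments bi2 {C X Y} : rename.
Arguments bp1 {C X Y} : rename.
Arguments bp2 {C X Y} : rename.
Arguments kerO {C X Y} f : rename.
Arguments kerI {C X Y} f : rename.
Arguments kerLift {C X Y} f {W} g : rename.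
Arguments cokO {C X Y} f : rename.
Arguments cokP {C X Y} f : rename.
Arguments cokDesc {C X Y} f {W} g : rename.

Section Defs.
Variable C : abcat.

Definition is_mono {X Y : C} (m : hom X Y) :=
  forall W (g : hom W X), comp m g = 0 -> g = 0.
Definition is_epi {X Y : C} (e : hom X Y) :=
  forall W (g : hom Y W), comp g e = 0 -> g = 0.
Definition is_iso {X Y : C} (f : hom X Y) :=
  exists g : hom Y X, comp g f = idm X /\ comp f g = idm Y.

Definition pairm {W X Y : C} (f : hom W X) (g : hom W Y) : hom W (bip X Y) :=
  comp bi1 f + comp bi2 g.
Definition copairm {W X Y : C} (f : hom X W) (g : hom Y W) : hom (bip X Y) W :=
  comp f bp1 + comp g bp2.

(* D = (F_L --(a_L,b_L)--> A (+) B --(a_R,b_R)--> F_R) *)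
Record diad := Diad {
  dFL : C; dA : C; dB : C; dFR : C;
  daL : hom dFL dA; dbL : hom dFL dB;
  daR : hom dA dFR; dbR : hom dB dFR }.

Definition Lmap (D : diad) := pairm (daL D) (dbL D).
Definition Rmap (D : diad) := copairm (daR D) (dbR D).

Definition is_diad (D : diad) :=
  [/\ comp (Rmap D) (Lmap D) = 0, is_mono (daL D) & is_epi (daR D)].

Definition diad_mor_comm (D D' : diad) (fL : hom (dFL D) (dFL D'))
  (fA : hom (dA D) (dA D')) (fB : hom (dB D) (dB D')) (fR : hom (dFR D) (dFR D')) :=
  [/\ comp fA (daL D) = comp (daL D') fL, comp fB (dbL D) = comp (dbL D') fL,
      comp fR (daR D) = comp (daR D') fA & comp fR (dbR D) = comp (dbR D') fB].

Definition diad_iso (D D' : diad) :=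
  exists fL fA fB fR, diad_mor_comm (D := D) (D' := D') fL fA fB fR /\
    [/\ is_iso fL, is_iso fA, is_iso fB & is_iso fR].

(* 0 -> F_- --(c_-,d1_-,d2_-)--> A (+) B1 (+) B2 --(c_+,d1_+,d2_+)--> F_+ -> 0 *)
Record triad := Triad {
  tFm : C; tA : C; tB1 : C; tB2 : C; tFp : C;
  tcm : hom tFm tA; td1m : hom tFm tB1; td2m : hom tFm tB2;
  tcp : hom tA tFp; td1p : hom tB1 tFp; td2p : hom tB2 tFp }.

Definition Tin (t : triad) : hom (tFm t) (bip (tA t) (bip (tB1 t) (tB2 t))) :=
  pairm (tcm t) (pairm (td1m t) (td2m t)).
Definition Tout (t : triad) : hom (bip (tA t) (bip (tB1 t) (tB2 t))) (tFp t) :=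
  copairm (tcp t) (copairm (td1p t) (td2p t)).

Definition is_triad (t : triad) :=
  [/\ comp (Tout t) (Tin t) = 0, is_mono (Tin t), is_epi (Tout t) &
      (forall W (g : hom W (bip (tA t) (bip (tB1 t) (tB2 t)))),
          comp (Tout t) g = 0 -> exists u, comp (Tin t) u = g)] /\
  [/\ is_mono (pairm (tcm t) (td1m t)), is_mono (pairm (tcm t) (td2m t)),
      is_epi (copairm (tcp t) (td1p t)) & is_epi (copairm (tcp t) (td2p t))].

Section TDef.
Variable D : diad.
Definition kerR := kerO (Rmap D).
Definition iotaA : hom kerR (dA D) := comp bp1 (kerI (Rmap D)).
Definition iotaB : hom kerR (dB D) := comp bp2 (kerI (Rmap D)).
Definition Lk : hom (dFL D) kerR := kerLift (Rmap D) (Lmap D).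
Definition HD := cokO Lk.
Definition hD : hom kerR HD := cokP Lk.
Definition cokL := cokO (Lmap D).
Definition piA : hom (dA D) cokL := comp (cokP (Lmap D)) bi1.
Definition piB : hom (dB D) cokL := comp (cokP (Lmap D)) bi2.
Definition kD : hom HD cokL := cokDesc Lk (comp (cokP (Lmap D)) (kerI (Rmap D))).
End TDef.

Definition T (D : diad) : triad :=
  @Triad (kerR D) (dA D) (dB D) (HD D) (cokL D)
    (iotaA D) (iotaB D) (hD D) (piA D) (piB D) (- kD D).

Definition r (t : triad) : triad :=
  @Triad (tFm t) (tA t) (tB2 t) (tB1 t) (tFp t)
    (tcm t) (td2m t) (td1m t) (tcp t) (td2p t) (td1p t).

Definition Tinv (t : triad) : diad :=
  let M := pairm (tcm t) (td1m t) in
  @Diad (kerO (td2m t)) (tA t) (tB1 t) (cokO M)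
    (comp (tcm t) (kerI (td2m t))) (comp (td1m t) (kerI (td2m t)))
    (comp (cokP M) bi1) (comp (cokP M) bi2).

Section DPrime.
Variable D : diad.
Definition aL' : hom (kerO (daR D)) (dA D) := kerI (daR D).
Definition aR' : hom (dA D) (cokO (daL D)) := cokP (daL D).
Definition aL'0 : hom (kerO (daR D)) (kerR D) := kerLift (Rmap D) (pairm aL' 0).
Definition bL' : hom (kerO (daR D)) (HD D) := comp (hD D) aL'0.
Definition qL : hom (cokL D) (cokO (daL D)) := cokDesc (Lmap D) (comp aR' bp1).
Definition bR' : hom (HD D) (cokO (daL D)) := - comp qL (kD D).

Definition Dprime : diad :=
  @Diad (kerO (daR D)) (dA D) (HD D) (cokO (daL D)) aL' bL' aR' bR'.
End DPrime.

End Defs.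

(* Main.v *)
Require Import Defs.
From mathcomp Require Import all_boot all_algebra.
Set Implicit Arguments. Unset Strict Implicit. Unset Printing Implicit Defensive.
Import GRing.Theory.
Local Open Scope ring_scope.

Section Aux.
Variable C : abcat.
Local Notation cA := Defs.compA.

Lemma comp0m (X Y Z : C) (f : Defs.hom X Y) : Defs.comp (0 : Defs.hom Y Z) f = 0.
Proof.
have H := compDl (0 : Defs.hom Y Z) 0 f; rewrite addr0 in H.
by apply: (addrI (Defs.comp 0 f)); rewrite addr0 -H.
Qed.

Lemma compm0 (X Y Z : C) (f : Defs.hom Y Z) : Defs.comp f (0 : Defs.hom X Y) = 0.
Proof.
have H := compDr f (0 : Defs.hom X Y) 0; rewrite addr0 in H.
by apply: (addrI (Defs.comp f 0)); rewrite addr0 -H.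
Qed.

Lemma compNm (X Y Z : C) (f : Defs.hom Y Z) (g : Defs.hom X Y) : Defs.comp (- f) g = - Defs.comp f g.
Proof. by apply/eqP; rewrite -subr_eq0 opprK -compDl addNr comp0m. Qed.

Lemma compmN (X Y Z : C) (f : Defs.hom Y Z) (g : Defs.hom X Y) : Defs.comp f (- g) = - Defs.comp f g.
Proof. by apply/eqP; rewrite -subr_eq0 opprK -compDr addNr compm0. Qed.

Lemma bp1_pair (W X Y : C) (f : Defs.hom W X) (g : Defs.hom W Y) : Defs.comp bp1 (pairm f g) = f.
Proof. by rewrite /pairm compDr !cA bp1i1 bp1i2 comp1m comp0m addr0. Qed.

Lemma bp2_pair (W X Y : C) (f : Defs.hom W X) (g : Defs.hom W Y) : Defs.comp bp2 (pairm f g) = g.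
Proof. by rewrite /pairm compDr !cA bp2i1 bp2i2 comp1m comp0m add0r. Qed.

Lemma copair_bi1 (W X Y : C) (f : Defs.hom X W) (g : Defs.hom Y W) : Defs.comp (copairm f g) bi1 = f.
Proof. by rewrite /copairm compDl -!cA bp1i1 bp2i1 compm1 compm0 addr0. Qed.

Lemma copair_bi2 (W X Y : C) (f : Defs.hom X W) (g : Defs.hom Y W) : Defs.comp (copairm f g) bi2 = g.
Proof. by rewrite /copairm compDl -!cA bp1i2 bp2i2 compm1 compm0 add0r. Qed.

Lemma pair_eta (W X Y : C) (x : Defs.hom W (bip X Y)) : pairm (Defs.comp bp1 x) (Defs.comp bp2 x) = x.
Proof. by rewrite /pairm !cA -compDl bsum comp1m. Qed.

Lemma pair_comp (V W X Y : C) (f : Defs.hom W X) (g : Defs.hom W Y) (h : Defs.hom V W) :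
  Defs.comp (pairm f g) h = pairm (Defs.comp f h) (Defs.comp g h).
Proof. by rewrite /pairm compDl -!cA. Qed.

Lemma copair_pair (V W X Y : C) (f : Defs.hom X W) (g : Defs.hom Y W) (a : Defs.hom V X) (b : Defs.hom V Y) :
  Defs.comp (copairm f g) (pairm a b) = Defs.comp f a + Defs.comp g b.
Proof. by rewrite /copairm compDl -!cA !bp1_pair !bp2_pair. Qed.
End Aux.

Section Main.
Variable C : abcat.
Variable D : diad C.
Hypothesis HRL : Defs.comp (Rmap D) (Lmap D) = 0.
Local Notation cA := Defs.compA.

Lemma kerI_eta : kerI (Rmap D) = pairm (iotaA D) (iotaB D).
Proof. by rewrite /iotaA /iotaB pair_eta. Qed.

Lemma Lk_eq : Defs.comp (kerI (Rmap D)) (Lk D) = Lmap D.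
Proof. exact: kerLiftK. Qed.

Lemma iotaA_Lk : Defs.comp (iotaA D) (Lk D) = daL D.
Proof. by rewrite /iotaA -cA Lk_eq /Lmap bp1_pair. Qed.

Lemma hD_Lk : Defs.comp (hD D) (Lk D) = 0.
Proof. exact: cokP0. Qed.

Lemma R_iota : Defs.comp (daR D) (iotaA D) + Defs.comp (dbR D) (iotaB D) = 0.
Proof. by rewrite -copair_pair -kerI_eta kerI0. Qed.

Lemma kD_hD : Defs.comp (kD D) (hD D) = Defs.comp (cokP (Lmap D)) (kerI (Rmap D)).
Proof. by apply: cokDescK; rewrite -cA Lk_eq cokP0. Qed.

Lemma qL_cokP : Defs.comp (qL D) (cokP (Lmap D)) = Defs.comp (aR' D) bp1.
Proof. by apply: cokDescK; rewrite -cA /Lmap bp1_pair cokP0. Qed.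

Lemma bR'_hD : Defs.comp (bR' D) (hD D) = - Defs.comp (aR' D) (iotaA D).
Proof.
by rewrite /bR' compNm -cA kD_hD cA qL_cokP -cA.
Qed.

Let M := pairm (iotaA D) (hD D).

Lemma fR_ok : Defs.comp (copairm (aR' D) (bR' D)) M = 0.
Proof. by rewrite /M copair_pair bR'_hD addrN. Qed.

Lemma iotaB_kI : Defs.comp (iotaB D) (kerI (iotaB D)) = 0.
Proof. exact: kerI0. Qed.

Lemma fL_ok : Defs.comp (daR D) (Defs.comp (iotaA D) (kerI (iotaB D))) = 0.
Proof.
have E : Defs.comp (daR D) (iotaA D) = - Defs.comp (dbR D) (iotaB D).
  by apply/eqP; rewrite -addr_eq0 R_iota.
by rewrite cA E compNm -cA iotaB_kI compm0 oppr0.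
Qed.

Lemma aL'0_ok : Defs.comp (Rmap D) (pairm (aL' D) 0) = 0.
Proof. by rewrite copair_pair compm0 addr0 /aL' kerI0. Qed.

Lemma kI_aL'0 : Defs.comp (kerI (Rmap D)) (aL'0 D) = pairm (aL' D) 0.
Proof. exact: kerLiftK aL'0_ok. Qed.

Lemma iotaB_aL'0 : Defs.comp (iotaB D) (aL'0 D) = 0.
Proof. by rewrite /iotaB -cA kI_aL'0 bp2_pair. Qed.

Lemma iotaA_aL'0 : Defs.comp (iotaA D) (aL'0 D) = aL' D.
Proof. by rewrite /iotaA -cA kI_aL'0 bp1_pair. Qed.

Definition fL := kerLift (daR D) (Defs.comp (iotaA D) (kerI (iotaB D))).
Definition gL := kerLift (iotaB D) (aL'0 D).

Lemma fL_eq : Defs.comp (aL' D) fL = Defs.comp (iotaA D) (kerI (iotaB D)).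
Proof. exact: kerLiftK fL_ok. Qed.

Lemma gL_eq : Defs.comp (kerI (iotaB D)) gL = aL'0 D.
Proof. exact: kerLiftK iotaB_aL'0. Qed.

Lemma aL'0_fL : Defs.comp (aL'0 D) fL = kerI (iotaB D).
Proof.
apply: kerI_mono.
rewrite cA kI_aL'0 pair_comp comp0m fL_eq.
by rewrite kerI_eta pair_comp iotaB_kI.
Qed.

Lemma gLfL : Defs.comp gL fL = idm _.
Proof. by apply: kerI_mono; rewrite cA gL_eq aL'0_fL compm1. Qed.

Lemma fLgL : Defs.comp fL gL = idm _.
Proof.
apply: kerI_mono; rewrite compm1 cA -/(aL' D) fL_eq -cA gL_eq iotaA_aL'0.
by [].
Qed.

Definition fR := cokDesc M (copairm (aR' D) (bR' D)).

Lemma fR_eq : Defs.comp fR (cokP M) = copairm (aR' D) (bR' D).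
Proof. exact: cokDescK fR_ok. Qed.

Lemma gR_ok : Defs.comp (Defs.comp (cokP M) bi1) (daL D) = 0.
Proof.
have E : Defs.comp M (Lk D) = Defs.comp bi1 (daL D).
  by rewrite /M pair_comp iotaA_Lk hD_Lk /pairm compm0 addr0.
by rewrite -cA -E cA cokP0 comp0m.
Qed.

Definition gR := cokDesc (daL D) (Defs.comp (cokP M) bi1).

Lemma gR_eq : Defs.comp gR (aR' D) = Defs.comp (cokP M) bi1.
Proof. exact: cokDescK gR_ok. Qed.

Lemma gR_bR' : Defs.comp gR (bR' D) = Defs.comp (cokP M) bi2.
Proof.
apply: cokP_epi; rewrite -cA bR'_hD compmN cA gR_eq.
have E : Defs.comp bi2 (hD D) = M - Defs.comp bi1 (iotaA D).
  by rewrite /M /pairm addrC addKr.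
by rewrite -[RHS]cA E compDr compmN cokP0 add0r cA.
Qed.

Lemma gRfR : Defs.comp gR fR = idm _.
Proof.
apply: cokP_epi; rewrite -cA fR_eq comp1m /copairm compDr !cA gR_eq gR_bR'.
by rewrite -!cA -compDr bsum compm1.
Qed.

Lemma fRgR : Defs.comp fR gR = idm _.
Proof.
apply: cokP_epi; rewrite -cA gR_eq comp1m cA fR_eq copair_bi1.
by [].
Qed.

End Main.

Theorem mainTheorem12 (C : abcat) (D : diad C) :
  is_diad D -> diad_iso (Tinv (r (T D))) (Dprime D).
Proof.
case=> HRL _ _.
exists (fL D), (idm _), (idm _), (fR D); split; last first.
  split.
  - by exists (gL D); split; [apply: gLfL | apply: fLgL].
  - by exists (idm _); rewrite comp1m.
  - by exists (idm _); rewrite comp1m.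
  - by exists (gR D); split; [apply: gRfR | apply: fRgR].
split => /=.
- by rewrite comp1m fL_eq.
- by rewrite comp1m /bL' -Defs.compA aL'0_fL.
- by rewrite compm1 Defs.compA (fR_eq HRL); apply: copair_bi1.
- by rewrite Defs.compA (fR_eq HRL) Defs.compm1; apply: copair_bi2.
Qed.
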